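(* Let $G$ be a connected graph of order at least three. Then $\gamma_{cI}(G)=2\beta(G)$ if and only if $G\in\mathcal{G}$.
   Context: All graphs are finite and simple; $N(v)$ is the open neighborhood of $v$. A leaf is a vertex of degree one. $\beta(G)$ is the vertex cover number (minimum size of a set containing at least one endpoint of every edge). For $f:V(G)\to\{0,1,2\}$ let $V_i=\{v: f(v)=i\}$ and $\omega(f)=\sum_v f(v)$. A covering Italian dominating function (CID function) of $G$ is an $f:V(G)\to\{0,1,2\}$ such that every vertex $v$ with $f(v)=0$ satisfies $\sum_{u\in N(v)}f(u)\ge 2$, and $V_0$ is an independent set. $\gamma_{cI}(G)$ is the minimum of $\omega(f)$ over all CID functions of $G$. The family $\mathcal{G}$: a graph $G$ belongs to $\mathcal{G}$ if it is constructed from a graph $H$ (an induced subgraph of $G$) as follows: $S=V(G)\setminus V(H)$ is an independent set of $G$; every vertex of $H$ is joined to at least two vertices of $S$, at least one of which is a leaf of $G$; and for every $k\ge1$, any $k$ independent vertices of $H$, chosen among those vertices of $H$ adjacent to exactly one leaf in $S$, have (together) at least $k$ non-leaf (independent) neighbors in $S$. *)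

(* Defs.v *)
From mathcomp Require Import all_boot all_order.
Set Implicit Arguments. Unset Strict Implicit. Unset Printing Implicit Defensive.

Section Graphs.
Variables (T : finType) (e : rel T).

Definition simple_graph : Prop := symmetric e /\ irreflexive e.
Definition connected_graph : Prop := forall x y : T, connect e x y.

Definition nbhd (v : T) : {set T} := [set u | e v u].
Definition is_leaf (v : T) : bool := #|nbhd v| == 1.

Definition independent (A : {set T}) : Prop :=
  forall u v, u \in A -> v \in A -> ~~ e u v.

Definition vertex_cover (C : {set T}) : bool :=
  [forall u, forall v, e u v ==> (u \in C) || (v \in C)].

(* vertex cover number: minimum size of a vertex cover ([set: T] is one) *)
Definition beta : nat :=
  #|[arg min_(C < [set: T] | vertex_cover C) #|C|]|.

Definition weight (f : {ffun T -> 'I_3}) : nat := \sum_(v : T) (f v : nat).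

Definition V0 (f : {ffun T -> 'I_3}) : {set T} := [set v | (f v : nat) == 0].

Definition is_CID (f : {ffun T -> 'I_3}) : bool :=
  [forall v, ((f v : nat) == 0) ==> (2 <= \sum_(u in nbhd v) (f u : nat))]
  && [forall u, forall v, (u \in V0 f) && (v \in V0 f) ==> ~~ e u v].

(* the constant-2 function is a CID function *)
Definition two_fun : {ffun T -> 'I_3} := [ffun => (ord_max : 'I_3)].

Definition gamma_cI : nat :=
  weight [arg min_(f < two_fun | is_CID f) weight f].

(* The family \mathcal{G}: H is the vertex set of the induced subgraph,
   S = V(G) \ V(H). *)
Definition in_family_G : Prop :=
  exists H : {set T},
    let S := ~: H in
    independent S /\
    (forall v, v \in H ->
       2 <= #|nbhd v :&: S| /\ exists2 l, l \in nbhd v :&: S & is_leaf l) /\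
    (forall I : {set T}, I \subset H -> independent I ->
       (forall v, v \in I -> #|[set l in nbhd v :&: S | is_leaf l]| = 1) ->
       #|I| <= #|[set u in S | ~~ is_leaf u &
                   [exists v in I, u \in nbhd v]]|).

End Graphs.

(* Main.v *)
Require Import Defs.
From mathcomp Require Import all_boot all_order.
From mathcomp Require Import zify.
Set Implicit Arguments. Unset Strict Implicit. Unset Printing Implicit Defensive.

Section Proofs.
Variables (T : finType) (e : rel T).
Hypothesis esym : symmetric e.
Hypothesis eirr : irreflexive e.

Notation N := (nbhd e).

Lemma inN u v : (u \in N v) = e v u.
Proof. by rewrite inE. Qed.

Lemma le_sum_elem (A : {set T}) (F : T -> nat) w :
  w \in A -> F w <= \sum_(v in A) F v.
Proof. by move=> Hw; rewrite (bigD1 w) //= leq_addr. Qed.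

Lemma sum_sub (A : {set T}) (F : T -> nat) :
  \sum_(v in A) F v <= \sum_v F v.
Proof. by rewrite [X in _ <= X](bigID (mem A)) /= leq_addr. Qed.

Lemma two_fun_CID : is_CID e (two_fun T).
Proof.
apply/andP; split; apply/forallP => u.
  by rewrite ffunE.
by apply/forallP => v; rewrite !inE ffunE.
Qed.

Lemma gamma_le (g : T -> nat) :
  (forall v, g v <= 2) ->
  (forall v, g v = 0 -> 2 <= \sum_(u in N v) g u) ->
  (forall u v, g u = 0 -> g v = 0 -> ~~ e u v) ->
  gamma_cI e <= \sum_v g v.
Proof.
move=> Hle H0 Hind.
pose f : {ffun T -> 'I_3} := [ffun v => inord (g v)].
have fv v : (f v : nat) = g v by rewrite ffunE inordK // ltnS.
have Hf : is_CID e f.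
  apply/andP; split; apply/forallP => u.
    apply/implyP; rewrite fv => /eqP /H0 /leq_trans; apply.
    by apply: eq_leq; apply: eq_bigr => x _; rewrite fv.
  apply/forallP => v; apply/implyP; rewrite !inE !fv => /andP[/eqP hu /eqP hv].
  exact: Hind.
rewrite /gamma_cI; case: arg_minnP; first exact: two_fun_CID.
move=> f0 _ Hmin; apply: leq_trans (Hmin f Hf) _.
by rewrite /weight; apply: eq_leq; apply: eq_bigr => v _; rewrite fv.
Qed.

Lemma CID_facts (f : {ffun T -> 'I_3}) : is_CID e f ->
  (forall v, (f v : nat) = 0 -> 2 <= \sum_(u in N v) (f u : nat)) /\
  (forall u v, (f u : nat) = 0 -> (f v : nat) = 0 -> ~~ e u v).
Proof.
case/andP => /forallP H1 /forallP H2; split.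
  by move=> v hv; move/implyP: (H1 v); apply; apply/eqP.
move=> u v hu hv; move/forallP: (H2 u) => /(_ v) /implyP; apply.
by rewrite !inE hu hv.
Qed.

Lemma gamma_ge (g : nat) :
  (forall f, is_CID e f -> g <= weight f) -> g <= gamma_cI e.
Proof.
move=> H; rewrite /gamma_cI; case: arg_minnP; first exact: two_fun_CID.
by move=> f0 Hf0 _; apply: H.
Qed.

Definition Cmin := [arg min_(C < [set: T] | vertex_cover e C) #|C|].

Lemma Cmin_spec : vertex_cover e Cmin /\ beta e = #|Cmin| /\
  (forall C, vertex_cover e C -> #|Cmin| <= #|C|).
Proof.
rewrite /beta /Cmin; case: arg_minnP.
  by apply/forallP => u; apply/forallP => v; rewrite !inE implybT.
by move=> C HC Hmin; split.
Qed.

Lemma cover_edge C u v : vertex_cover e C -> e u v -> (u \in C) || (v \in C).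
Proof. by move=> /forallP/(_ u)/forallP/(_ v)/implyP; apply. Qed.

Lemma path_closed (A : {set T}) :
  (forall x y, x \in A -> e x y -> y \in A) ->
  forall p x, x \in A -> path e x p -> last x p \in A.
Proof.
move=> HA; elim => [|y p IH] x Hx //= /andP[exy Hp].
by apply: IH Hp; exact: HA Hx exy.
Qed.


Lemma lower (H : {set T}) :
  independent e (~: H) ->
  (forall v, v \in H -> 2 <= #|N v :&: ~: H| /\
     exists2 l, l \in N v :&: ~: H & is_leaf e l) ->
  (forall I : {set T}, I \subset H -> independent e I ->
    (forall v, v \in I -> #|[set l in N v :&: ~: H | is_leaf e l]| = 1) ->
    #|I| <= #|[set u in ~: H | ~~ is_leaf e u & [exists v in I, u \in N v]]|) ->
  forall f, is_CID e f -> 2 * #|H| <= weight f.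
Proof.
move=> hS hH hI f Hf.
have [Ha0 Hind] := CID_facts Hf.
set S := ~: H in hS hH hI *.
pose L v := [set l in N v :&: S | is_leaf e l].
pose blk v := (f v : nat) + \sum_(l in L v) (f l : nat).
pose D := [set v in H | blk v < 2].
have leafN : forall v l, l \in L v -> N l = [set v].
  move=> v l; rewrite /L !inE => /andP[/andP[evl _] ll].
  move: ll; rewrite /is_leaf => /cards1P [x Hx].
  have : v \in N l by rewrite inN esym.
  by rewrite Hx inE => /eqP ->.
have Lpos : forall v l, v \in H -> l \in L v -> blk v < 2 -> 1 <= (f l : nat).
  move=> v l vH lL Hb; rewrite lt0n; apply/negP => /eqP al0.
  have := Ha0 l al0; rewrite (leafN v l lL) big_set1 => av.
  rewrite /blk in Hb; lia.
have Dprop : forall v, v \in D -> [/\ (f v : nat) = 0, #|L v| = 1 & 1 <= blk v].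
  move=> v; rewrite inE => /andP[vH Hb].
  have hs : #|L v| <= \sum_(l in L v) (f l : nat).
    rewrite -sum1_card; apply: leq_sum => l lL; exact: Lpos vH lL Hb.
  have hl : 0 < #|L v|.
    have [_ [l lS ll]] := hH v vH; rewrite card_gt0; apply/set0Pn; exists l.
    by rewrite inE lS ll.
  rewrite /blk in Hb *; split; lia.
have DH : D \subset H by apply/subsetP => v; rewrite inE => /andP[].
have Dind : independent e D.
  move=> u v uD vD; have [hu _ _] := Dprop u uD; have [hv _ _] := Dprop v vD.
  exact: Hind.
set MD := [set u in S | ~~ is_leaf e u & [exists v in D, u \in N v]].
have HD : #|D| <= #|MD|.
  apply: hI DH Dind _ => v vD; by have [_ h _] := Dprop v vD.
have MDpos : forall u, u \in MD -> 1 <= (f u : nat).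
  move=> u; rewrite inE => /andP[_ /andP[_ /existsP [v /andP[vD uv]]]].
  rewrite lt0n; apply/negP => /eqP fu0; have [fv0 _ _] := Dprop v vD.
  by move: (Hind v u fv0 fu0); rewrite -inN uv.
set LS := [set u in S | is_leaf e u].
have W1 : \sum_(v in H) (f v : nat) + \sum_(v in LS) (f v : nat)
          + \sum_(v in MD) (f v : nat) <= weight f.
  rewrite /weight [\sum_(v in H) _]big_mkcond [\sum_(v in LS) _]big_mkcond.
  rewrite [\sum_(v in MD) _]big_mkcond -!big_split /=; apply: leq_sum => v _.
  rewrite /MD /LS /S !inE.
  case vH: (v \in H); case vl: (is_leaf e v); rewrite /= ?addn0 ?add0n //.
  by case: ifP.
have W2 : \sum_(v in H) \sum_(l in L v) (f l : nat) <= \sum_(v in LS) (f v : nat).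
  rewrite [X in _ <= X]big_mkcond /=.
  have -> : \sum_(v in H) \sum_(l in L v) (f l : nat) =
      \sum_(v in H) \sum_l (if l \in L v then (f l : nat) else 0).
    by apply: eq_bigr => v _; rewrite big_mkcond.
  rewrite exchange_big /=; apply: leq_sum => l _.
  case lLS: (l \in LS).
  - apply: (@leq_trans (\sum_(v in N l) (f l : nat))); last first.
      rewrite sum_nat_const; move: (lLS); rewrite /LS !inE /is_leaf => /andP[_ /eqP ->].
      by rewrite mul1n.
    apply: leq_trans (sum_sub H (fun v => if l \in L v then (f l : nat) else 0)) _.
    rewrite [X in _ <= X]big_mkcond /=; apply: leq_sum => v _.
    case: ifP => // lL; move: lL; rewrite /L !inE => /andP[/andP[evl _] _].
    by rewrite esym evl.
  - rewrite big1 // => v _; case: ifP => // lL; exfalso.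
    move: lL lLS; rewrite /L /LS !inE => /andP[/andP[_ ->] ->] //.
have W3 : #|MD| <= \sum_(v in MD) (f v : nat).
  by rewrite -sum1_card; apply: leq_sum => u /MDpos.
have W4 : 2 * #|H| <= \sum_(v in H) (blk v + (if v \in D then 1 else 0)).
  rewrite mulnC -sum_nat_const; apply: leq_sum => v vH.
  case vD: (v \in D).
    by have [_ _ h] := Dprop v vD; lia.
  move: vD; rewrite /D inE vH /= => /negbT; rewrite -leqNgt; lia.
have W5 : \sum_(v in H) (blk v + (if v \in D then 1 else 0)) =
   \sum_(v in H) (f v : nat) + \sum_(v in H) \sum_(l in L v) (f l : nat)
   + \sum_(v in H) (if v \in D then 1 else 0).
  by rewrite /blk !big_split.
have W6 : \sum_(v in H) (if v \in D then 1 else 0) <= #|D|.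
  apply: leq_trans (sum_sub H _) _.
  by rewrite -big_mkcond sum1_card.
lia.
Qed.

Section Conn.
Hypothesis conn : connected_graph e.
Hypothesis n3 : 3 <= #|T|.

Lemma has_nbr v : exists w, e v w.
Proof.
have : 0 < #|[set~ v]| by rewrite cardsC1; lia.
rewrite card_gt0 => /set0Pn [y]; rewrite !inE => yv.
move: (conn v y) => /connectP [[|w p] /= Hp Hy].
  by rewrite Hy eqxx in yv.
by case/andP: Hp => evw _; exists w.
Qed.

Lemma other_nbr v l : e v l -> is_leaf e l -> exists w, e v w && (w != l).
Proof.
move=> evl Hl.
case: (boolP [exists w, e v w && (w != l)]) => [/existsP //|/existsPn Hn].
exfalso.
move: Hl; rewrite /is_leaf => /cards1P [x0 Hx0].
have vx : v = x0 by apply/set1P; rewrite -Hx0 inN esym.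
pose A := [set v; l].
have HA : forall x y, x \in A -> e x y -> y \in A.
  move=> x y; rewrite !inE => /orP[/eqP ->|/eqP ->] exy.
    by move: (Hn y); rewrite exy /= negbK => ->; rewrite orbT.
  have : y \in N l by rewrite inN.
  by rewrite Hx0 inE -vx => ->.
have : 0 < #|~: A|.
  have h1 := cardsC A; have h2 : #|A| <= 2 by rewrite /A cards2; case: (v != l).
  lia.
rewrite card_gt0 => /set0Pn [z]; rewrite inE => zA.
move: (conn v z) => /connectP [p Hp Hz].
have vA : v \in A by rewrite !inE eqxx.
by have := path_closed HA vA Hp; rewrite -Hz (negbTE zA).
Qed.


Lemma gamma_le_2beta : gamma_cI e <= 2 * beta e.
Proof.
have [HC [Hb _]] := Cmin_spec. set C := Cmin in HC Hb *.
pose g v := if v \in C then 2 else 0.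
apply: (@leq_trans (\sum_v g v)).
  apply: gamma_le.
  - by move=> v; rewrite /g; case: ifP.
  - move=> v; rewrite {1}/g; case: ifP => // vC _.
    have [w evw] := has_nbr v.
    have wC : w \in C by move: (cover_edge HC evw); rewrite vC.
    have Hw : w \in N v by rewrite inN.
    by apply: leq_trans (le_sum_elem g Hw); rewrite /g wC.
  - move=> u v; rewrite /g; case: ifP => // uC _; case: ifP => // vC _.
    by apply/negP => euv; move: (cover_edge HC euv); rewrite uC vC.
by rewrite Hb /g -big_mkcond sum_nat_const mulnC.
Qed.

Section Eq.
Hypothesis Heq : gamma_cI e = 2 * beta e.

Lemma claim1 v0 : v0 \in Cmin -> exists2 l, l \in N v0 :&: ~: Cmin & is_leaf e l.
Proof.
move=> v0C.
have [HC [Hb _]] := Cmin_spec. set C := Cmin in HC Hb v0C *.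
case: (boolP [exists l, (l \in N v0 :&: ~: C) && is_leaf e l]) =>
  [/existsP [l /andP[]]|/existsPn Hn]; first by exists l.
exfalso.
pose g v := if v == v0 then 1 else if v \in C then 2 else 0.
have Hg : gamma_cI e <= \sum_v g v.
  apply: gamma_le.
  - by move=> v; rewrite /g; case: ifP => //; case: ifP.
  - move=> v; rewrite {1}/g; case: eqP => // vv0; case: ifP => // vC _.
    have [w [evw wv0]] : exists w, e v w /\ w != v0.
      have [w0 evw0] := has_nbr v.
      case: (eqVneq w0 v0) => [ew0|]; last by exists w0.
      subst w0.
      have vnl : ~~ is_leaf e v.
        by move: (Hn v); rewrite !inE esym evw0 vC.
      have : 1 < #|N v|.
        have : 0 < #|N v| by rewrite card_gt0; apply/set0Pn; exists v0; rewrite inN.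
        move: vnl; rewrite /is_leaf; lia.
      rewrite (cardsD1 v0) inN evw0 /= ltnS card_gt0 => /set0Pn [w].
      rewrite !inE => /andP[wv0 evw].
      by exists w.
    have wC : w \in C by move: (cover_edge HC evw); rewrite vC.
    have Hw : w \in N v by rewrite inN.
    by apply: leq_trans (le_sum_elem g Hw); rewrite /g (negbTE wv0) wC.
  - move=> u v; rewrite /g; case: eqP => // _; case: ifP => // uC _.
    case: eqP => // _; case: ifP => // vC _.
    by apply/negP => euv; move: (cover_edge HC euv); rewrite uC vC.
have H1 : \sum_v (if v == v0 then 1 else 0) = 1 by rewrite -big_mkcond big_pred1_eq.
have Hsum : \sum_v g v + \sum_v (if v == v0 then 1 else 0) = 2 * #|C|.
  rewrite -big_split /= mulnC -sum_nat_const [RHS]big_mkcond /=; apply: eq_bigr => v _.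
  by rewrite /g; case: eqP => [->|]; rewrite ?v0C ?addn0.
rewrite H1 in Hsum; lia.
Qed.

Lemma claim3 (I : {set T}) : I \subset Cmin -> independent e I ->
  (forall v, v \in I -> #|[set l in N v :&: ~: Cmin | is_leaf e l]| = 1) ->
  #|I| <= #|[set u in ~: Cmin | ~~ is_leaf e u & [exists v in I, u \in N v]]|.
Proof.
have [HC [Hb _]] := Cmin_spec.
move=> IC Iind HL. set C := Cmin in HC Hb IC HL *.
set M := [set u in ~: C | ~~ is_leaf e u & [exists v in I, u \in N v]].
rewrite leqNgt; apply/negP => HMI.
pose W := [set u in ~: C | [exists v in I, u \in N v]].
pose LI := [set u in ~: C | is_leaf e u & [exists v in I, u \in N v]].
pose g v := if v \in I then 0 else if v \in C then 2 else if v \in W then 1 else 0.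
have IinC : forall v, v \in I -> v \in C by move=> v; apply: (subsetP IC).
have Hg : gamma_cI e <= \sum_v g v.
  apply: gamma_le.
  - by move=> v; rewrite /g; do 3 (case: ifP => //).
  - move=> v; rewrite {1}/g; case: ifP => [vI _|vI].
    + have /eqP/cards1P [l Hl] := HL v vI.
      have : l \in [set l in N v :&: ~: C | is_leaf e l] by rewrite Hl set11.
      rewrite !inE => /andP[/andP[evl lC] lleaf].
      have [w /andP[evw wl]] := other_nbr evl lleaf.
      have lI : l \notin I by apply/negP => /IinC; rewrite (negbTE lC).
      have lW : l \in W by rewrite !inE lC /=; apply/existsP; exists v; rewrite vI inN.
      have glv : g l = 1 by rewrite /g (negbTE lI) (negbTE lC) lW.
      have gw : 1 <= g w.
        have wI : w \notin I by apply/negP => wI; move: (Iind v w vI wI); rewrite evw.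
        rewrite /g (negbTE wI); case: ifP => // wC.
        have wW : w \in W by rewrite !inE wC /=; apply/existsP; exists v; rewrite vI inN.
        by rewrite wW.
      rewrite (bigD1 l) ?inN //= (bigD1 w) /=; last by rewrite inN evw wl.
      rewrite glv; lia.
    + case: ifP => // vC; case: ifP => // vW _.
      have [w evw] := has_nbr v.
      have wC : w \in C by move: (cover_edge HC evw); rewrite vC.
      have wI : w \notin I.
        apply/negP => wI; move/negbT: vW => /negP; apply.
        by rewrite !inE vC /=; apply/existsP; exists w; rewrite wI inN esym.
      have Hw : w \in N v by rewrite inN.
      by apply: leq_trans (le_sum_elem g Hw); rewrite /g (negbTE wI) wC.
  - move=> u v; rewrite /g; case: ifP => uI.
    + case: ifP => vI; first by move=> _ _; exact: Iind.
      move=> _; case: ifP => // vC; case: ifP => // vW _.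
      apply/negP => euv; move/negbT: vW => /negP; apply.
      by rewrite !inE vC /=; apply/existsP; exists u; rewrite uI inN.
    + case: ifP => // uC; case: ifP => // uW _.
      case: ifP => vI.
        move=> _; apply/negP => euv; move/negbT: uW => /negP; apply.
        by rewrite !inE uC /=; apply/existsP; exists v; rewrite vI inN esym.
      case: ifP => // vC; case: ifP => // vW _.
      by apply/negP => euv; move: (cover_edge HC euv); rewrite uC vC.
have Hsum : \sum_v g v = 2 * #|C :\: I| + #|W|.
  have -> : #|W| = \sum_v (if v \in W then 1 else 0) by rewrite -big_mkcond sum1_card.
  have -> : 2 * #|C :\: I| = \sum_v (if v \in C :\: I then 2 else 0).
    by rewrite -big_mkcond sum_nat_const mulnC.
  rewrite -big_split; apply: eq_bigr => v _ /=; rewrite /g !inE.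
  case vI: (v \in I) => /=.
    by rewrite (IinC v vI).
  by case: (v \in C) => //=; case: existsP.
have LIle : #|LI| <= #|I|.
  pose pk v := odflt v [pick l in [set l in N v :&: ~: C | is_leaf e l]].
  apply: leq_trans (leq_imset_card pk I).
  apply: subset_leq_card; apply/subsetP => u.
  rewrite !inE => /andP[uC /andP[ul /existsP [v /andP[vI uv]]]].
  apply/imsetP; exists v => //; rewrite /pk.
  have /eqP/cards1P [x Hx] := HL v vI.
  have : u \in [set l in N v :&: ~: C | is_leaf e l].
    by rewrite !inE; rewrite inE in uv; rewrite uv uC ul.
  rewrite Hx inE => /eqP ->.
  case: pickP => [y|H]; rewrite ?inE; first by move/eqP.
  by move: (H x); rewrite inE eqxx.
have WLM : #|W| <= #|LI| + #|M|.
  apply: leq_trans (leq_card_setU LI M).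
  apply: subset_leq_card; apply/subsetP => u; rewrite !inE => /andP[a b].
  by case: (is_leaf e u); rewrite /= a b ?orbT.
have ICc : #|I| <= #|C| by apply: subset_leq_card.
have HCD : #|C :\: I| = #|C| - #|I|.
  by have := cardsID I C; rewrite (setIidPr IC); lia.
lia.
Qed.

Lemma claim2 v : v \in Cmin -> 2 <= #|N v :&: ~: Cmin|.
Proof.
move=> vC; rewrite leqNgt; apply/negP => Hlt.
have [l lS lleaf] := claim1 vC.
have Hc : #|[set l0 in N v :&: ~: Cmin | is_leaf e l0]| = 1.
  have h1 : #|[set l0 in N v :&: ~: Cmin | is_leaf e l0]| <= #|N v :&: ~: Cmin|.
    by apply: subset_leq_card; apply/subsetP => y; rewrite inE => /andP[].
  have h2 : 0 < #|[set l0 in N v :&: ~: Cmin | is_leaf e l0]|.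
    by rewrite card_gt0; apply/set0Pn; exists l; rewrite inE lS lleaf.
  lia.
have := @claim3 [set v].
have a1 : [set v] \subset Cmin by rewrite sub1set.
have a2 : independent e [set v].
  by move=> x y; rewrite !inE => /eqP -> /eqP ->; rewrite eirr.
have a3 : forall x, x \in [set v] -> #|[set l0 in N x :&: ~: Cmin | is_leaf e l0]| = 1.
  by move=> x; rewrite inE => /eqP ->.
move/(_ a1 a2 a3).
rewrite cards1 card_gt0 => /set0Pn [u]; rewrite !inE.
move=> /andP[uC /andP[ul /existsP [x /andP[]]]]; rewrite inE => /eqP -> evu.
have : #|[set u; l]| <= #|N v :&: ~: Cmin|.
  apply: subset_leq_card; apply/subsetP => y; rewrite !inE.
  case/orP => /eqP ->; first by rewrite -inN evu uC.
  by move: lS; rewrite !inE.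
rewrite cards2; have -> : u != l by apply/negP => /eqP ul'; rewrite ul' lleaf in ul.
lia.
Qed.

End Eq.

End Conn.
End Proofs.

Theorem theorem5 (T : finType) (e : rel T) :
  simple_graph e -> connected_graph e -> 3 <= #|T| ->
  (gamma_cI e = 2 * beta e <-> in_family_G e).
Proof.
move=> [esym eirr] conn n3; split.
- move=> Heq.
  have [HC [Hb _]] := Cmin_spec e.
  exists (Cmin e); cbv zeta; split; [|split].
  + move=> u v; rewrite !inE => uC vC; apply/negP => euv.
    by move: (cover_edge HC euv); rewrite (negbTE uC) (negbTE vC).
  + move=> v vC; split; [exact: (claim2 esym eirr conn n3 Heq vC) | exact: (claim1 esym conn n3 Heq vC)].
  + move=> I; exact: (claim3 esym conn n3 Heq).
- case=> H [hS [hH hI]].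
  apply/eqP; rewrite eqn_leq (gamma_le_2beta conn n3) /=.
  have [_ [Hb Hmin]] := Cmin_spec e.
  have HcovH : vertex_cover e H.
    apply/forallP => u; apply/forallP => v; apply/implyP => euv.
    case uH: (u \in H) => //=; case vH: (v \in H) => //.
    by have := hS u v; rewrite !inE uH vH /= => /(_ isT isT); rewrite euv.
  have hm := Hmin H HcovH.
  apply: gamma_ge => f Hf.
  have := lower esym hS hH hI Hf.
  lia.
Qed.
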